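(* Let $Q=((A,V);B;\alpha)$ be as in the context and $\varphi$ any scale function. (1) Every $x\in A\hat\otimes_\alpha B$ can be written as $x=x_1+x_2$ with $x_1,x_2\in\mathfrak B_\varphi(Q)$. (2) Suppose moreover that $A$ and $B$ are unital Banach algebras and $A\hat\otimes_\alpha B$ is a Banach algebra with multiplication determined by $(a_1\otimes b_1)(a_2\otimes b_2)=(a_1a_2)\otimes(b_1b_2)$. Then every invertible $x\in(A\hat\otimes_\alpha B)^{-1}$ can be written as $x=x_1x_2$ where $x_1,x_2$ are invertible and $x_1,x_1^{-1},x_2,x_2^{-1}\in\mathfrak B_\varphi(Q)$.
   Context: $\mathbb F\in\{\mathbb R,\mathbb C\}$. $A$ is an infinite-dimensional separable Banach space over $\mathbb F$ and $V_0\subsetneq V_1\subsetneq\cdots\subset A$ are finite-dimensional subspaces whose union $V$ is dense in $A$. $B$ is a Banach space over $\mathbb F$, $\alpha$ a reasonable crossnorm on $A\otimes B$, $A\hat\otimes_\alpha B$ the completion. $E_n(x):=\inf_{h\in V_n\otimes B}\|x-h\|_{A\hat\otimes_\alpha B}$. A scale function is a nonincreasing $\varphi:\mathbb N\to(0,\infty)$ with $\varphi(n)\to0$. $\mathfrak B_\varphi(Q)=\{x:\liminf_{n\to\infty}(E_n(x))^{\varphi(n)}<1\}$. *)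

(* Defs.v *)
From Stdlib Require Import Reals List.
Open Scope R_scope.

Record Scalars := mkScalars {
  sc :> Type; s0 : sc; s1 : sc;
  sadd : sc -> sc -> sc; smul : sc -> sc -> sc; sopp : sc -> sc;
  sabs : sc -> R }.

Definition RF : Scalars := mkScalars R 0 1 Rplus Rmult Ropp Rabs.

Definition Cx : Type := (R * R)%type.
Definition CF : Scalars :=
  mkScalars Cx (0, 0) (1, 0)
    (fun z w => (fst z + fst w, snd z + snd w))
    (fun z w => (fst z * fst w - snd z * snd w, fst z * snd w + snd z * fst w))
    (fun z => (- fst z, - snd z))
    (fun z => sqrt (fst z ^ 2 + snd z ^ 2)).

Record NSpace (F : Scalars) := mkNS {
  pt :> Type; vzero : pt; vadd : pt -> pt -> pt; vopp : pt -> pt;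
  vscal : F -> pt -> pt; vnorm : pt -> R }.
Arguments vzero {F} _.
Arguments vadd {F _} _ _.
Arguments vopp {F _} _.
Arguments vscal {F _} _ _.
Arguments vnorm {F _} _.

Section Defs.
Context {F : Scalars}.

Definition vsub {X : NSpace F} (x y : X) : X := vadd x (vopp y).

Definition is_banach (X : NSpace F) : Prop :=
  (forall x y z : X, vadd x (vadd y z) = vadd (vadd x y) z) /\
  (forall x y : X, vadd x y = vadd y x) /\
  (forall x : X, vadd x (vzero X) = x) /\
  (forall x : X, vadd x (vopp x) = vzero X) /\
  (forall (c : F) (x y : X), vscal c (vadd x y) = vadd (vscal c x) (vscal c y)) /\
  (forall (c d : F) (x : X), vscal (sadd F c d) x = vadd (vscal c x) (vscal d x)) /\
  (forall (c d : F) (x : X), vscal (smul F c d) x = vscal c (vscal d x)) /\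
  (forall x : X, vscal (s1 F) x = x) /\
  (forall x : X, 0 <= vnorm x) /\
  (forall x : X, vnorm x = 0 -> x = vzero X) /\
  (forall (c : F) (x : X), vnorm (vscal c x) = sabs F c * vnorm x) /\
  (forall x y : X, vnorm (vadd x y) <= vnorm x + vnorm y) /\
  (forall u : nat -> X,
     (forall eps, 0 < eps -> exists N, forall m n, (N <= m)%nat -> (N <= n)%nat ->
        vnorm (vsub (u m) (u n)) < eps) ->
     exists l : X, forall eps, 0 < eps -> exists N, forall n, (N <= n)%nat ->
        vnorm (vsub (u n) l) < eps).

Definition lsum {X : NSpace F} (l : list X) : X := fold_right vadd (vzero X) l.

Definition in_span {X : NSpace F} (l : list X) (x : X) : Prop :=
  exists cs : list F, length cs = length l /\
    x = lsum (map (fun p => vscal (fst p) (snd p)) (combine cs l)).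

Definition is_subspace {X : NSpace F} (P : X -> Prop) : Prop :=
  P (vzero X) /\ (forall x y, P x -> P y -> P (vadd x y)) /\
  (forall c x, P x -> P (vscal c x)).

Definition finite_dim {X : NSpace F} (P : X -> Prop) : Prop :=
  exists l : list X, forall x, P x <-> in_span l x.

Definition is_filtration {A : NSpace F} (V : nat -> A -> Prop) : Prop :=
  (forall n, is_subspace (V n) /\ finite_dim (V n)) /\
  (forall n x, V n x -> V (S n) x) /\
  (forall n, exists x, V (S n) x /\ ~ V n x) /\
  (forall x eps, 0 < eps -> exists n y, V n y /\ vnorm (vsub x y) < eps).

Definition tsum {A B X : NSpace F} (t : A -> B -> X) (l : list (A * B)) : X :=
  fold_right (fun p acc => vadd (t (fst p) (snd p)) acc) (vzero X) l.

Definition is_linear_functional {X : NSpace F} (f : X -> F) : Prop :=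
  (forall x y, f (vadd x y) = sadd F (f x) (f y)) /\
  (forall c x, f (vscal c x) = smul F c (f x)).

Definition bounded_by {X : NSpace F} (f : X -> F) (M : R) : Prop :=
  forall x, sabs F (f x) <= M * vnorm x.

Definition fgsum {A B : NSpace F} (f : A -> F) (g : B -> F) (l : list (A * B)) : F :=
  fold_right (fun p acc => sadd F (smul F (f (fst p)) (g (snd p))) acc) (s0 F) l.

Definition is_bilinear {A B X : NSpace F} (t : A -> B -> X) : Prop :=
  (forall a a' b, t (vadd a a') b = vadd (t a b) (t a' b)) /\
  (forall c a b, t (vscal c a) b = vscal c (t a b)) /\
  (forall a b b', t a (vadd b b') = vadd (t a b) (t a b')) /\
  (forall c a b, t a (vscal c b) = vscal c (t a b)).

(** X with t : A x B -> X is the completion A ⊗^_α B for a reasonable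
    crossnorm α: X is Banach, t is bilinear, α(a⊗b) <= |a||b|, the dual
    condition α*(f⊗g) <= |f||g| holds, and span{t a b} is dense in X. *)
Definition is_tensor_completion {A B X : NSpace F} (t : A -> B -> X) : Prop :=
  is_banach X /\ is_bilinear t /\
  (forall a b, vnorm (t a b) <= vnorm a * vnorm b) /\
  (forall (f : A -> F) (g : B -> F) (M N : R),
     is_linear_functional f -> is_linear_functional g ->
     bounded_by f M -> bounded_by g N ->
     forall l, sabs F (fgsum f g l) <= M * N * vnorm (tsum t l)) /\
  (forall x : X, forall eps, 0 < eps -> exists l, vnorm (vsub x (tsum t l)) < eps).

Definition in_VnB {A B X : NSpace F} (V : nat -> A -> Prop) (t : A -> B -> X)
  (n : nat) (h : X) : Prop :=
  exists l : list (A * B), Forall (fun p => V n (fst p)) l /\ h = tsum t l.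

Definition rpow (a p : R) : R := if Rle_dec a 0 then 0 else Rpower a p.

Definition scale_function (phi : nat -> R) : Prop :=
  (forall n, 0 < phi n) /\ (forall n, phi (S n) <= phi n) /\ Un_cv phi 0.

(** 𝔅_φ(Q) = {x : liminf_n (E_n x)^{φ n} < 1}, with
    E_n x = inf_{h ∈ V_n⊗B} |x - h|.  Unfolded: there is r < 1 such that
    for infinitely many n, (E_n x)^{φ n} < r, i.e. some h ∈ V_n⊗B has
    |x-h|^{φ n} < r. *)
Definition Bphi {A B X : NSpace F} (V : nat -> A -> Prop) (t : A -> B -> X)
  (phi : nat -> R) (x : X) : Prop :=
  exists r, r < 1 /\ forall N, exists n, (N <= n)%nat /\
    exists h, in_VnB V t n h /\ rpow (vnorm (vsub x h)) (phi n) < r.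

Definition is_banach_algebra (X : NSpace F) (m : X -> X -> X) : Prop :=
  is_banach X /\
  (forall x y z, m x (m y z) = m (m x y) z) /\
  (forall x y z, m x (vadd y z) = vadd (m x y) (m x z)) /\
  (forall x y z, m (vadd x y) z = vadd (m x z) (m y z)) /\
  (forall c x y, vscal c (m x y) = m (vscal c x) y) /\
  (forall c x y, vscal c (m x y) = m x (vscal c y)) /\
  (forall x y, vnorm (m x y) <= vnorm x * vnorm y).

Definition is_unit {X : NSpace F} (m : X -> X -> X) (e : X) : Prop :=
  forall x, m e x = x /\ m x e = x.

Definition is_unital_banach_algebra (X : NSpace F) (m : X -> X -> X) (e : X) : Prop :=
  is_banach_algebra X m /\ is_unit m e /\ vnorm e = 1.

Definition inverse_pair {X : NSpace F} (m : X -> X -> X) (e x y : X) : Prop :=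
  m x y = e /\ m y x = e.

Definition invertible {X : NSpace F} (m : X -> X -> X) (e x : X) : Prop :=
  exists y, inverse_pair m e x y.

End Defs.

(* Main.v *)
Require Import Defs.
From Stdlib Require Import Reals List Lra Lia ClassicalEpsilon Classical.
Open Scope R_scope.

Definition scal_ok (F : Scalars) : Prop :=
  exists c, sadd F c (s1 F) = s0 F /\ sadd F (s0 F) (s0 F) = s0 F /\
            sabs F c = 1 /\ sabs F (s0 F) = 0.

Lemma scal_ok_HF (F : Scalars) : F = RF \/ F = CF -> scal_ok F.
Proof.
  intros [-> | ->].
  - exists (-1). simpl. repeat split; try ring.
    unfold Rabs; destruct Rcase_abs; lra. apply Rabs_R0.
  - exists (-1, -0). simpl. repeat split.
    + f_equal; ring.
    + f_equal; ring.
    + match goal with |- sqrt ?a = _ => replace a with 1 by ring end; apply sqrt_1.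
    + match goal with |- sqrt ?a = _ => replace a with 0 by ring end; apply sqrt_0.
Qed.

Lemma le_eps (a b : R) : (forall eps, 0 < eps -> a <= b + eps) -> a <= b.
Proof.
  intros H. destruct (Rle_dec a b) as [h|h]; auto.
  specialize (H ((a - b)/2)). lra.
Qed.

Existing Class is_banach.
Existing Class scal_ok.
Set Default Proof Using "All".

Section Grp.
Context {F : Scalars} {X : NSpace F} {HX : is_banach X} {Hsc : scal_ok F}.

Lemma addA (x y z : X) : vadd x (vadd y z) = vadd (vadd x y) z.
Proof. destruct HX as (H1&H2&H3&H4&H5&H6&H7&H8&H9&H10&H11&H12&H13). auto. Qed.
Lemma addC (x y : X) : vadd x y = vadd y x.
Proof. destruct HX as (H1&H2&H3&H4&H5&H6&H7&H8&H9&H10&H11&H12&H13). auto. Qed.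
Lemma add0 (x : X) : vadd x (vzero X) = x.
Proof. destruct HX as (H1&H2&H3&H4&H5&H6&H7&H8&H9&H10&H11&H12&H13). auto. Qed.
Lemma addN (x : X) : vadd x (vopp x) = vzero X.
Proof. destruct HX as (H1&H2&H3&H4&H5&H6&H7&H8&H9&H10&H11&H12&H13). auto. Qed.
Lemma scalD (c d : F) (x : X) : vscal (sadd F c d) x = vadd (vscal c x) (vscal d x).
Proof. destruct HX as (H1&H2&H3&H4&H5&H6&H7&H8&H9&H10&H11&H12&H13). auto. Qed.
Lemma scal1 (x : X) : vscal (s1 F) x = x.
Proof. destruct HX as (H1&H2&H3&H4&H5&H6&H7&H8&H9&H10&H11&H12&H13). auto. Qed.
Lemma norm_ge0 (x : X) : 0 <= vnorm x.
Proof. destruct HX as (H1&H2&H3&H4&H5&H6&H7&H8&H9&H10&H11&H12&H13). auto. Qed.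
Lemma norm_def (x : X) : vnorm x = 0 -> x = vzero X.
Proof. destruct HX as (H1&H2&H3&H4&H5&H6&H7&H8&H9&H10&H11&H12&H13). auto. Qed.
Lemma norm_scal (c : F) (x : X) : vnorm (vscal c x) = sabs F c * vnorm x.
Proof. destruct HX as (H1&H2&H3&H4&H5&H6&H7&H8&H9&H10&H11&H12&H13). auto. Qed.
Lemma norm_tri (x y : X) : vnorm (vadd x y) <= vnorm x + vnorm y.
Proof. destruct HX as (H1&H2&H3&H4&H5&H6&H7&H8&H9&H10&H11&H12&H13). auto. Qed.
Lemma complete (u : nat -> X) :
     (forall eps, 0 < eps -> exists N, forall m n, (N <= m)%nat -> (N <= n)%nat ->
        vnorm (vsub (u m) (u n)) < eps) ->
     exists l : X, forall eps, 0 < eps -> exists N, forall n, (N <= n)%nat ->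
        vnorm (vsub (u n) l) < eps.
Proof. destruct HX as (H1&H2&H3&H4&H5&H6&H7&H8&H9&H10&H11&H12&H13). auto. Qed.

Lemma add0l (x : X) : vadd (vzero X) x = x.
Proof. rewrite addC; apply add0. Qed.

Lemma opp_unique (a b : X) : vadd a b = vzero X -> b = vopp a.
Proof.
  intros H. rewrite <- (add0 b), <- (addN a), addA, (addC b a), H, add0l. reflexivity.
Qed.

Lemma oppK (a : X) : vopp (vopp a) = a.
Proof. symmetry; apply opp_unique. rewrite addC; apply addN. Qed.

Lemma opp0 : vopp (vzero X) = vzero X.
Proof. symmetry; apply opp_unique, add0. Qed.

Lemma oppD (a b : X) : vopp (vadd a b) = vadd (vopp a) (vopp b).
Proof.
  symmetry; apply opp_unique.
  rewrite <- addA, (addC (vopp a) (vopp b)), (addA b), addN, add0l, addN. reflexivity.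
Qed.

Lemma add_cancel (a b c : X) : vadd a c = vadd b c -> a = b.
Proof.
  intros H. rewrite <- (add0 a), <- (add0 b), <- (addN c), !addA, H. reflexivity.
Qed.

Lemma subv (a : X) : vsub a a = vzero X.
Proof. apply addN. Qed.

Lemma sub0 (a : X) : vsub a (vzero X) = a.
Proof. unfold vsub. rewrite opp0, add0. reflexivity. Qed.

Lemma sub_add (a b c : X) : vadd (vsub a b) (vsub b c) = vsub a c.
Proof.
  unfold vsub. rewrite <- addA, (addA (vopp b)), (addC (vopp b) b), addN, add0l.
  reflexivity.
Qed.

Lemma sub_opp (a b : X) : vsub b a = vopp (vsub a b).
Proof. unfold vsub. rewrite oppD, oppK, addC. reflexivity. Qed.

Lemma add_sub (a b : X) : vadd b (vsub a b) = a.
Proof.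
  unfold vsub. rewrite (addC a), addA, addN, add0l. reflexivity.
Qed.

Lemma sub_add2 (a b c d : X) :
  vsub (vadd a b) (vadd c d) = vadd (vsub a c) (vsub b d).
Proof.
  unfold vsub. rewrite oppD, <- !addA. f_equal.
  rewrite !addA. f_equal. apply addC.
Qed.

Lemma sub_eq0 (a b : X) : vsub a b = vzero X -> a = b.
Proof.
  intros H. rewrite <- (add_sub a b), H, add0. reflexivity.
Qed.

Lemma scal0 (x : X) : vscal (s0 F) x = vzero X.
Proof.
  destruct Hsc as (c & Hc1 & H00 & Hc & H0).
  assert (E : vadd (vscal (s0 F) x) (vscal (s0 F) x) = vadd (vzero X) (vscal (s0 F) x)).
  { rewrite <- scalD, H00, add0l. reflexivity. }
  apply add_cancel in E. exact E.
Qed.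

Lemma norm0 : vnorm (vzero X) = 0.
Proof.
  destruct Hsc as (c & Hc1 & H00 & Hc & H0).
  rewrite <- (scal0 (vzero X)), norm_scal, H0. ring.
Qed.

Lemma norm_opp (x : X) : vnorm (vopp x) = vnorm x.
Proof.
  destruct Hsc as (c & Hc1 & H00 & Hc & H0).
  assert (E : vscal c x = vopp x).
  { apply opp_unique. rewrite addC.
    assert (E : vadd (vscal c x) (vscal (s1 F) x) = vzero X)
      by (rewrite <- scalD, Hc1; apply scal0).
    rewrite scal1 in E. exact E. }
  rewrite <- E, norm_scal, Hc. ring.
Qed.

Lemma norm_sym (a b : X) : vnorm (vsub a b) = vnorm (vsub b a).
Proof. rewrite (sub_opp b a), norm_opp. reflexivity. Qed.

Lemma norm_tri_sub (a b c : X) : vnorm (vsub a c) <= vnorm (vsub a b) + vnorm (vsub b c).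
Proof. rewrite <- (sub_add a b c). apply norm_tri. Qed.

Lemma half_pow_small (K eps : R) : 0 <= K -> 0 < eps -> exists n, K * (1/2)^n < eps.
Proof.
  intros HK He.
  destruct (pow_lt_1_zero (1/2)) with (y := eps / (K + 1)) as [N HN].
  { rewrite Rabs_right; lra. }
  { apply Rdiv_lt_0_compat; lra. }
  exists N. specialize (HN N (le_n N)).
  assert (Hp : 0 <= (1/2)^N) by (apply pow_le; lra).
  rewrite Rabs_right in HN by lra.
  apply Rmult_lt_compat_l with (r := K + 1) in HN; [|lra].
  replace ((K + 1) * (eps / (K + 1))) with eps in HN by (field; lra).
  nra.
Qed.

Lemma cauchy_geo (u : nat -> X) (c : nat -> R) :
  (forall m, vnorm (vsub (u (S m)) (u m)) <= c m) ->
  (forall m, c (S m) <= c m / 2) -> (forall m, 0 <= c m) ->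
  exists l, forall n, vnorm (vsub (u n) l) <= 2 * c n.
Proof.
  intros Hu Hc Hc0.
  assert (Hk : forall n k, vnorm (vsub (u (k+n)%nat) (u n)) <= 2*c n - 2*c (k+n)%nat).
  { intros n k; induction k.
    - simpl. rewrite subv, norm0. lra.
    - simpl (S k + n)%nat. eapply Rle_trans. apply norm_tri_sub with (b := u (k+n)%nat).
      specialize (Hu (k+n)%nat); specialize (Hc (k+n)%nat); lra. }
  assert (Hmono : forall n k, c (k+n)%nat <= c n).
  { intros n k; induction k; simpl. lra.
    specialize (Hc (k+n)%nat); specialize (Hc0 (k+n)%nat); lra. }
  assert (Hdec : forall n, c n <= c 0%nat * (1/2)^n).
  { induction n; simpl. lra.
    specialize (Hc n).
    replace (c 0%nat * (1 / 2 * (1 / 2) ^ n)) with ((c 0%nat * (1/2)^n) / 2) by field.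
    lra. }
  destruct (complete u) as [l Hl].
  { intros eps He.
    destruct (half_pow_small (c 0%nat) (eps/2)) as [N HN]; [apply Hc0|lra|].
    exists N. intros m n Hm Hn.
    assert (HcN : 2 * c N < eps) by (specialize (Hdec N); lra).
    destruct (Nat.le_ge_cases n m) as [Hnm|Hnm].
    - replace m with ((m - n) + n)%nat by lia.
      specialize (Hk n (m-n)%nat). specialize (Hc0 ((m-n)+n)%nat).
      replace n with ((n - N) + N)%nat in Hk at 1 by lia.
      specialize (Hmono N (n-N)%nat). replace (n - N + N)%nat with n in * by lia.
      lra.
    - rewrite norm_sym.
      replace n with ((n - m) + m)%nat by lia.
      specialize (Hk m (n-m)%nat). specialize (Hc0 ((n-m)+m)%nat).
      specialize (Hmono N (m-N)%nat). replace (m - N + N)%nat with m in * by lia.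
      lra. }
  exists l. intros n. apply le_eps. intros eps He.
  destruct (Hl eps He) as [N HN].
  specialize (HN (Nat.max N n) (Nat.le_max_l _ _)).
  eapply Rle_trans. apply norm_tri_sub with (b := u (Nat.max N n)).
  rewrite norm_sym.
  replace (Nat.max N n) with ((Nat.max N n - n) + n)%nat by lia.
  specialize (Hk n (Nat.max N n - n)%nat). specialize (Hc0 ((Nat.max N n - n) + n)%nat).
  replace (Nat.max N n - n + n)%nat with (Nat.max N n) in * by lia.
  lra.
Qed.

Lemma fixpoint (T : X -> X) :
  (forall a b, vnorm (vsub (T a) (T b)) <= /2 * vnorm (vsub a b)) -> exists s, T s = s.
Proof.
  intros HT.
  set (u := fun n => Nat.iter n T (vzero X)).
  assert (Hu : forall n, u (S n) = T (u n)) by reflexivity.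
  set (K := vnorm (vsub (u 1%nat) (u 0%nat))).
  assert (HK : 0 <= K) by apply norm_ge0.
  set (c := fun m => K * (1/2)^m).
  assert (Hinc : forall m, vnorm (vsub (u (S m)) (u m)) <= c m).
  { induction m.
    - unfold c. change (K * (1/2)^0) with (K * 1). fold K. lra.
    - rewrite (Hu (S m)), (Hu m).
      eapply Rle_trans. apply HT. unfold c in *. rewrite Hu in IHm. simpl pow. lra. }
  destruct (cauchy_geo u c Hinc) as [l Hl].
  { intros m; unfold c; simpl. lra. }
  { intros m; unfold c; apply Rmult_le_pos; auto; apply pow_le; lra. }
  exists l. apply sub_eq0, norm_def.
  apply Rle_antisym; [|apply norm_ge0].
  apply le_eps; intros eps He.
  destruct (half_pow_small (2*K) eps) as [n Hn]; [lra|lra|].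
  eapply Rle_trans. apply norm_tri_sub with (b := u (S n)).
  rewrite (Hu n).
  pose proof (HT l (u n)) as H1. rewrite (norm_sym l (u n)) in H1.
  pose proof (Hl n) as H2. pose proof (Hl (S n)) as H3.
  rewrite Hu in H3. unfold c in *. rewrite <- tech_pow_Rmult in H3.
  set (p := (1/2)^n) in *.
  replace (2 * (K * (1 / 2 * p))) with (K * p) in H3 by field.
  replace (2 * K * p) with (2 * (K * p)) in Hn by ring. lra.
Qed.

Lemma baire (W : X -> Prop) (P : nat -> X -> Prop) :
  (exists w, W w) ->
  (forall w, W w -> exists rho, 0 < rho /\ forall z, vnorm (vsub z w) < rho -> W z) ->
  (forall k w, W w -> P k w -> exists rho, 0 < rho /\ forall z, vnorm (vsub z w) < rho -> P k z) ->
  (forall k w eps, W w -> 0 < eps -> exists z, W z /\ P k z /\ vnorm (vsub z w) < eps) ->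
  exists w, W w /\ forall k, P k w.
Proof.
  intros [w0 Hw0] HW HP HD.
  set (Inv := fun k (p : X * R) => 0 < snd p /\ forall z, vnorm (vsub z (fst p)) <= 2 * snd p ->
        W z /\ forall j, (j < k)%nat -> P j z).
  assert (init : {p | Inv 0%nat p}).
  { apply constructive_indefinite_description.
    destruct (HW w0 Hw0) as [rho [Hr Hrho]].
    exists (w0, rho/3). split; simpl. lra.
    intros z Hz. split. apply Hrho; lra. intros j Hj; lia. }
  assert (step : forall k p, Inv k p -> {p' | Inv (S k) p' /\
            vnorm (vsub (fst p') (fst p)) <= snd p / 2 /\ snd p' <= snd p / 2}).
  { intros k [w r] [Hr Hb]. apply constructive_indefinite_description. simpl in *.
    destruct (Hb w) as [Ww _]. rewrite subv, norm0; lra.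
    destruct (HD k w (r/2) Ww) as [z [Wz [Pz Hzw]]]; [lra|].
    destruct (HW z Wz) as [r1 [Hr1 H1]].
    destruct (HP k z Wz Pz) as [r2 [Hr2 H2]].
    set (r' := Rmin (Rmin r1 r2 / 3) (r/2)).
    assert (Hr'1 : r' <= Rmin r1 r2 / 3) by apply Rmin_l.
    assert (Hr'2 : r' <= r / 2) by apply Rmin_r.
    assert (Hr'p : 0 < r') by (apply Rmin_pos; [apply Rdiv_lt_0_compat; [apply Rmin_pos|]|]; lra).
    pose proof (Rmin_l r1 r2). pose proof (Rmin_r r1 r2).
    exists (z, r'). unfold Inv; simpl. split; [split; [lra|]|split; lra].
    intros y Hy. split. apply H1; lra.
    intros j Hj. destruct (Nat.eq_dec j k) as [->|Hne].
    - apply H2; lra.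
    - apply (Hb y). pose proof (norm_tri_sub y z w). lra. lia. }
  set (stp := fun k (p : {p | Inv k p}) =>
        exist (Inv (S k)) (proj1_sig (step k _ (proj2_sig p)))
              (proj1 (proj2_sig (step k _ (proj2_sig p))))).
  pose (sq := fix sqf k : {p | Inv k p} := match k with 0%nat => init | S k => stp k (sqf k) end).
  set (u := fun k => fst (proj1_sig (sq k))).
  set (c := fun k => snd (proj1_sig (sq k)) / 2).
  assert (Hrel : forall k, vnorm (vsub (u (S k)) (u k)) <= c k /\ c (S k) <= c k / 2).
  { intros k. unfold u, c. change (sq (S k)) with (stp k (sq k)). unfold stp.
    cbn [proj1_sig].
    pose proof (proj2_sig (step k _ (proj2_sig (sq k)))) as [_ [Ha Hb]].
    lra. }
  assert (Hc0 : forall k, 0 <= c k).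
  { intros k. unfold c. destruct (proj2_sig (sq k)) as [Hr _]. lra. }
  destruct (cauchy_geo u c (fun k => proj1 (Hrel k)) (fun k => proj2 (Hrel k)) Hc0) as [l Hl].
  exists l. split.
  - pose proof (proj2_sig (sq 0%nat)) as [Hr Hb]. apply (Hb l).
    rewrite norm_sym. specialize (Hl 0%nat). unfold u, c in Hl. cbv beta in Hl. lra.
  - intros k. pose proof (proj2_sig (sq (S k))) as [Hr Hb]. apply (Hb l).
    rewrite norm_sym. specialize (Hl (S k)). unfold u, c in Hl. cbv beta in Hl. lra. lia.
Qed.

End Grp.

Set Default Proof Using "All".
Lemma add_subl {F} {X : NSpace F} {HX : is_banach X} {Hsc : scal_ok F} (a b : X) : vadd (vsub a b) b = a.
Proof. rewrite addC. apply add_sub. Qed.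

Lemma hom_props {F} {X Y : NSpace F} {HX : is_banach X} {HY : is_banach Y} {Hsc : scal_ok F} (g : X -> Y) :
  (forall a b, g (vadd a b) = vadd (g a) (g b)) ->
  g (vzero X) = vzero Y /\ (forall a, g (vopp a) = vopp (g a)) /\
  (forall a b, g (vsub a b) = vsub (g a) (g b)).
Proof.
  intros Hg.
  assert (H0 : g (vzero X) = vzero Y).
  { apply (add_cancel _ _ (g (vzero X))). rewrite <- Hg, add0, add0l.
    reflexivity. }
  assert (HN : forall a, g (vopp a) = vopp (g a)).
  { intros a. apply opp_unique. rewrite <- Hg, addN, H0. reflexivity. }
  split; [exact H0|split; [exact HN|]].
  intros a b. unfold vsub. rewrite Hg, HN. reflexivity.
Qed.

Section Alg.
Context {F : Scalars} {X : NSpace F} {HX : is_banach X} {Hsc : scal_ok F}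
  (mX : X -> X -> X) (eX : X) (HA : is_banach_algebra X mX) (He : is_unit mX eX).

Lemma massoc x y z : mX x (mX y z) = mX (mX x y) z.
Proof. destruct HA as (_&H&_). auto. Qed.
Lemma mdistr x y z : mX x (vadd y z) = vadd (mX x y) (mX x z).
Proof. destruct HA as (_&_&H&_). auto. Qed.
Lemma mdistl x y z : mX (vadd x y) z = vadd (mX x z) (mX y z).
Proof. destruct HA as (_&_&_&H&_). auto. Qed.
Lemma mnorm x y : vnorm (mX x y) <= vnorm x * vnorm y.
Proof. destruct HA as (_&_&_&_&_&_&H). auto. Qed.
Lemma mel x : mX eX x = x.
Proof. apply He. Qed.
Lemma mer x : mX x eX = x.
Proof. apply He. Qed.

Lemma msubr x a b : mX x (vsub a b) = vsub (mX x a) (mX x b).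
Proof. apply (hom_props (mX x)). intros; apply mdistr. Qed.
Lemma msubl x a b : mX (vsub a b) x = vsub (mX a x) (mX b x).
Proof. apply (hom_props (fun y => mX y x)). intros; apply mdistl. Qed.

Lemma inv_unique x y y' : inverse_pair mX eX x y -> inverse_pair mX eX x y' -> y = y'.
Proof.
  intros [H1 H2] [H3 H4].
  rewrite <- (mer y), <- H3, massoc, H2, mel. reflexivity.
Qed.

Lemma sub_sub_e (e p q : X) : vsub (vsub e p) (vsub e q) = vsub q p.
Proof.
  unfold vsub at 2 3. rewrite sub_add2, subv, add0l.
  unfold vsub. rewrite oppK, addC. reflexivity.
Qed.

Lemma sub_e_q (e q : X) : vsub (vsub e q) e = vopp q.
Proof. unfold vsub. rewrite addC, addA, (addC (vopp e) e), addN, add0l. reflexivity. Qed.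

Lemma inv_near z z' : inverse_pair mX eX z z' -> forall eps, 0 < eps ->
  exists rho, 0 < rho /\ forall u, vnorm (vsub u z) < rho ->
    exists u', inverse_pair mX eX u u' /\ vnorm (vsub u' z') < eps.
Proof.
  intros [Hzz Hz'z] eps Heps.
  set (a := vnorm z'). set (ne := vnorm eX).
  assert (Ha : 0 <= a) by apply norm_ge0. assert (Hne : 0 <= ne) by apply norm_ge0.
  set (K := 2 * (ne + 1) * (a + 1) * (a + 1)).
  assert (HK : 0 < K) by (unfold K; repeat apply Rmult_lt_0_compat; lra).
  exists (Rmin (/ (2 * (a + 1))) (eps / K)). split.
  { apply Rmin_pos. apply Rinv_0_lt_compat; lra. apply Rdiv_lt_0_compat; lra. }
  intros u Hu.
  pose proof (Rmin_l (/ (2 * (a + 1))) (eps / K)) as Hm1.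
  pose proof (Rmin_r (/ (2 * (a + 1))) (eps / K)) as Hm2.
  set (d := vsub u z) in *. set (v := mX z' d).
  assert (Hd0 : 0 <= vnorm d) by apply norm_ge0.
  assert (H3 : vnorm v <= a * vnorm d) by apply mnorm.
  assert (Hv : vnorm v <= /2).
  { assert (a * vnorm d <= (a + 1) * / (2 * (a + 1))).
    { apply Rmult_le_compat; lra. }
    replace ((a + 1) * / (2 * (a + 1))) with (/2) in H by (field; lra). lra. }
  set (T1 := fun s => vsub eX (mX v s)).
  set (T2 := fun s => vsub eX (mX s v)).
  destruct (fixpoint T1) as [sR HsR].
  { intros x y. unfold T1. rewrite sub_sub_e, <- msubr, (norm_sym x y).
    eapply Rle_trans. apply mnorm. apply Rmult_le_compat_r. apply norm_ge0. exact Hv. }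
  destruct (fixpoint T2) as [sL HsL].
  { intros x y. unfold T2. rewrite sub_sub_e, <- msubl, (norm_sym x y).
    eapply Rle_trans. apply mnorm. rewrite Rmult_comm.
    apply Rmult_le_compat_r. apply norm_ge0. exact Hv. }
  unfold T1, T2 in *.
  set (w := vadd eX v).
  assert (HR : mX w sR = eX).
  { unfold w. rewrite mdistl, mel. rewrite <- HsR at 1. apply add_subl. }
  assert (HL : mX sL w = eX).
  { unfold w. rewrite mdistr, mer. rewrite <- HsL at 1. apply add_subl. }
  assert (HLR : sL = sR).
  { rewrite <- (mer sL), <- HR, massoc, HL, mel. reflexivity. }
  subst sL.
  assert (Hu_eq : mX z w = u).
  { unfold w, v. rewrite mdistr, mer, massoc, Hzz, mel. apply add_sub. }
  exists (mX sR z'). split.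
  - split.
    + rewrite <- Hu_eq, <- massoc, (massoc w), HR, mel. exact Hzz.
    + rewrite <- Hu_eq, massoc, <- (massoc sR z' z), Hz'z, mer. exact HL.
  - assert (H1 : vnorm (vsub (mX sR z') z') <= vnorm (vsub sR eX) * a).
    { rewrite <- (mel z') at 2. rewrite <- msubl. apply mnorm. }
    assert (H2 : vnorm (vsub sR eX) <= vnorm v * vnorm sR).
    { rewrite <- HsR at 1. rewrite sub_e_q, norm_opp. apply mnorm. }
    assert (H4 : vnorm sR <= 2 * ne).
    { assert (vnorm sR <= ne + vnorm v * vnorm sR).
      { rewrite <- HsR at 1. unfold vsub at 1. eapply Rle_trans. apply norm_tri.
        rewrite norm_opp. fold ne. pose proof (mnorm v sR). lra. }
      pose proof (norm_ge0 sR). nra. }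
    assert (HsR0 : 0 <= vnorm sR) by apply norm_ge0.
    assert (Hv0 : 0 <= vnorm v) by apply norm_ge0.
    assert (H5 : vnorm (vsub (mX sR z') z') <= (a * vnorm d) * (2 * ne) * a).
    { eapply Rle_trans. exact H1. apply Rmult_le_compat_r; [lra|].
      eapply Rle_trans. exact H2. apply Rmult_le_compat; lra. }
    assert (H6 : (a * vnorm d) * (2 * ne) * a <= K * vnorm d).
    { unfold K. replace ((a * vnorm d) * (2 * ne) * a) with ((2 * ne * a * a) * vnorm d) by ring.
      apply Rmult_le_compat_r; [lra|].
      assert (a * a <= (a+1)*(a+1)) by nra.
      assert (2 * ne <= 2 * (ne + 1)) by lra.
      replace (2 * (ne + 1) * (a + 1) * (a + 1)) with ((2 * (ne + 1)) * ((a + 1) * (a + 1))) by ring.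
      replace (2 * ne * a * a) with ((2 * ne) * (a * a)) by ring.
      apply Rmult_le_compat; nra. }
    assert (H7 : K * vnorm d < eps).
    { assert (vnorm d < eps / K) by lra.
      apply Rmult_lt_compat_l with (r := K) in H; [|lra].
      replace (K * (eps / K)) with eps in H by (field; lra). exact H. }
    lra.
Qed.

End Alg.
Set Default Proof Using "All".

Definition delta (phi : nat -> R) (n : nat) := Rpower (1/2) (/ phi n).

Lemma delta_pos phi n : 0 < delta phi n.
Proof. unfold delta, Rpower. apply exp_pos. Qed.

Lemma rpow_small p a : 0 < p -> a < Rpower (1/2) (/ p) -> rpow a p < 1/2.
Proof.
  intros Hp Ha. unfold rpow. destruct (Rle_dec a 0) as [h|h]; [lra|].
  apply Rnot_le_lt in h.
  assert (E : Rpower (Rpower (1/2) (/p)) p = 1/2).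
  { rewrite Rpower_mult, Rinv_l by lra. apply Rpower_1. lra. }
  rewrite <- E. apply Rlt_Rpower_l; lra.
Qed.

Section Tens.
Context {F : Scalars} {A B X : NSpace F} {HA : is_banach A} {HB : is_banach B}
  {HXb : is_banach X} {Hsc : scal_ok F}
  (V : nat -> A -> Prop) (t : A -> B -> X) (HV : is_filtration V)
  (HT : is_tensor_completion t) (phi : nat -> R) (Hphi : scale_function phi).

Lemma V_mono n m x : V n x -> (n <= m)%nat -> V m x.
Proof.
  intros Hx Hle. induction Hle; auto. destruct HV as (_&H&_). auto.
Qed.

Lemma t_subl a a' b : t (vsub a a') b = vsub (t a b) (t a' b).
Proof.
  apply (hom_props (fun a => t a b)). intros. destruct HT as (_&(H&_)&_). apply H.
Qed.

Lemma approx_list l eps : 0 < eps -> exists n0, forall n, (n0 <= n)%nat ->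
  exists l', Forall (fun p => V n (fst p)) l' /\ vnorm (vsub (tsum t l) (tsum t l')) < eps.
Proof.
  revert eps. induction l as [|[a b] l IH]; intros eps He.
  - exists 0%nat. intros n _. exists nil. split. constructor.
    simpl. rewrite subv, norm0. exact He.
  - assert (Hb0 : 0 <= vnorm b) by apply norm_ge0.
    destruct HV as (_&_&_&Hd).
    destruct (Hd a (eps / 2 / (vnorm b + 1))) as [n1 [v [Hv Hav]]].
    { apply Rdiv_lt_0_compat; lra. }
    destruct (IH (eps/2)) as [n2 Hn2]; [lra|].
    exists (Nat.max n1 n2). intros n Hn.
    destruct (Hn2 n) as [l' [Hl' Hnl]]; [lia|].
    exists ((v, b) :: l'). split.
    + constructor; auto. simpl. apply (V_mono n1); auto. lia.
    + simpl. rewrite sub_add2. eapply Rle_lt_trans. apply norm_tri.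
      rewrite <- t_subl.
      assert (vnorm (t (vsub a v) b) <= vnorm (vsub a v) * vnorm b).
      { destruct HT as (_&_&H&_). apply H. }
      assert (vnorm (vsub a v) * vnorm b <= vnorm (vsub a v) * (vnorm b + 1)).
      { apply Rmult_le_compat_l. apply norm_ge0. lra. }
      assert (vnorm (vsub a v) * (vnorm b + 1) < eps / 2).
      { apply Rmult_lt_compat_r with (r := vnorm b + 1) in Hav; [|lra].
        replace (eps / 2 / (vnorm b + 1) * (vnorm b + 1)) with (eps/2) in Hav by (field; lra).
        exact Hav. }
      lra.
Qed.

Lemma approx y eps N : 0 < eps -> exists n h, (N <= n)%nat /\ in_VnB V t n h /\ vnorm (vsub y h) < eps.
Proof.
  intros He. destruct HT as (_&_&_&_&Hden).
  destruct (Hden y (eps/2)) as [l Hl]; [lra|].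
  destruct (approx_list l (eps/2)) as [n0 Hn0]; [lra|].
  destruct (Hn0 (Nat.max n0 N)) as [l' [Hl' Hll']]; [lia|].
  exists (Nat.max n0 N), (tsum t l'). split; [lia|]. split.
  - exists l'. auto.
  - eapply Rle_lt_trans. apply norm_tri_sub with (b := tsum t l). lra.
Qed.

Definition Q (N : nat) (z : X) : Prop :=
  exists n, (N <= n)%nat /\ exists h, in_VnB V t n h /\ vnorm (vsub z h) < delta phi n.

Lemma Q_open N z : Q N z -> exists rho, 0 < rho /\ forall z', vnorm (vsub z' z) < rho -> Q N z'.
Proof.
  intros [n [Hn [h [Hh Hzh]]]]. exists (delta phi n - vnorm (vsub z h)). split; [lra|].
  intros z' Hz'. exists n. split; auto. exists h. split; auto.
  eapply Rle_lt_trans. apply norm_tri_sub with (b := z). lra.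
Qed.

Lemma Q_dense N z eps : 0 < eps -> exists z', Q N z' /\ vnorm (vsub z' z) < eps.
Proof.
  intros He. destruct (approx z eps N He) as [n [h [Hn [Hh Hzh]]]].
  exists h. split.
  - exists n. split; auto. exists h. split; auto. rewrite subv, norm0. apply delta_pos.
  - rewrite norm_sym. exact Hzh.
Qed.

Lemma Q_mono N M z : Q M z -> (N <= M)%nat -> Q N z.
Proof. intros [n [Hn H]] HNM. exists n. split; [lia|exact H]. Qed.

Lemma Q_Bphi z : (forall N, Q N z) -> Bphi V t phi z.
Proof.
  intros HQ. exists (1/2). split; [lra|]. intros N.
  destruct (HQ N) as [n [Hn [h [Hh Hzh]]]]. exists n. split; auto. exists h. split; auto.
  apply rpow_small; auto. destruct Hphi as (Hp&_). apply Hp.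
Qed.

Lemma baire_funs (W : X -> Prop) (f : nat -> X -> X) :
  (exists w, W w) ->
  (forall w, W w -> exists rho, 0 < rho /\ forall z, vnorm (vsub z w) < rho -> W z) ->
  (forall i w eps, W w -> 0 < eps -> exists rho, 0 < rho /\
      forall z, W z -> vnorm (vsub z w) < rho -> vnorm (vsub (f i z) (f i w)) < eps) ->
  (forall i w eps, W w -> 0 < eps -> exists rho, 0 < rho /\
      forall y, vnorm (vsub y (f i w)) < rho -> exists z, W z /\ f i z = y /\ vnorm (vsub z w) < eps) ->
  exists w, W w /\ forall i, (i < 4)%nat -> Bphi V t phi (f i w).
Proof.
  intros Hne HW Hc Hd.
  destruct (baire W (fun k w => Q k (f (k mod 4)%nat w))) as [w [Ww Hw]]; auto.
  - intros k w Ww Qw.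
    destruct (Q_open _ _ Qw) as [r1 [Hr1 H1]].
    destruct (Hc (k mod 4)%nat w r1 Ww Hr1) as [r2 [Hr2 H2]].
    destruct (HW w Ww) as [r3 [Hr3 H3]].
    exists (Rmin r2 r3). split. apply Rmin_pos; auto.
    intros z Hz. pose proof (Rmin_l r2 r3). pose proof (Rmin_r r2 r3).
    apply H1, H2; [apply H3|]; lra.
  - intros k w eps Ww He.
    destruct (Hd (k mod 4)%nat w eps Ww He) as [r [Hr H]].
    destruct (Q_dense k (f (k mod 4)%nat w) r Hr) as [y [Qy Hy]].
    destruct (H y Hy) as [z [Wz [Hz Hzw]]]. exists z. split; auto. split; auto.
    rewrite Hz. exact Qy.
  - exists w. split; auto. intros i Hi. apply Q_Bphi. intros N.
    apply (Q_mono N (i + N * 4)%nat); [|lia].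
    specialize (Hw (i + N * 4)%nat).
    rewrite Nat.Div0.mod_add, Nat.mod_small in Hw by lia. exact Hw.
Qed.

End Tens.

Lemma pair_swap {F} {X : NSpace F} (m : X -> X -> X) e a b :
  inverse_pair m e a b -> inverse_pair m e b a.
Proof. intros [H1 H2]; split; auto. Qed.

Set Default Proof Using "All".
Lemma sub_sub_e' {F} {X : NSpace F} {HX : is_banach X} {Hsc : scal_ok F} (e p q : X) :
  vsub (vsub e p) (vsub e q) = vsub q p.
Proof.
  unfold vsub at 2 3. rewrite sub_add2, subv, add0l.
  unfold vsub. rewrite oppK, addC. reflexivity.
Qed.

Lemma mul_small a b eps : 0 <= a -> 0 <= b -> 0 < eps -> b < eps / (a + 1) -> a * b < eps.
Proof.
  intros Ha Hb He H.
  apply Rmult_lt_compat_r with (r := a + 1) in H; [|lra].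
  replace (eps / (a + 1) * (a + 1)) with eps in H by (field; lra). nra.
Qed.

Theorem theorem2p12 (F : Scalars) (HF : F = RF \/ F = CF)
  (A B X : NSpace F) (V : nat -> A -> Prop) (t : A -> B -> X) (phi : nat -> R)
  (HA : is_banach A) (HB : is_banach B) (HV : is_filtration V)
  (HX : is_tensor_completion t) (Hphi : scale_function phi) :
  (forall x : X, exists x1 x2 : X,
      Bphi V t phi x1 /\ Bphi V t phi x2 /\ x = vadd x1 x2) /\
  (forall (mA : A -> A -> A) (eA : A) (mB : B -> B -> B) (eB : B)
          (mX : X -> X -> X) (eX : X),
      is_unital_banach_algebra A mA eA ->
      is_unital_banach_algebra B mB eB ->
      is_banach_algebra X mX -> is_unit mX eX ->
      (forall a1 b1 a2 b2, mX (t a1 b1) (t a2 b2) = t (mA a1 a2) (mB b1 b2)) ->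
      forall x : X, invertible mX eX x ->
      exists x1 y1 x2 y2 : X,
        x = mX x1 x2 /\ inverse_pair mX eX x1 y1 /\ inverse_pair mX eX x2 y2 /\
        Bphi V t phi x1 /\ Bphi V t phi y1 /\
        Bphi V t phi x2 /\ Bphi V t phi y2).
Proof.
  pose proof (scal_ok_HF F HF) as Hsc.
  pose proof (proj1 HX) as HXb.
  split.
  - intros x.
    set (f := fun (i : nat) (w : X) => match i with 0%nat => w | _ => vsub x w end).
    destruct (baire_funs V t HV HX phi Hphi (fun _ => True) f) as [w [_ Hw]].
    + exists x; trivial.
    + intros w _. exists 1. split; [lra|]. auto.
    + intros i w eps _ He. exists eps. split; auto. intros z _ Hz.
      destruct i; simpl; auto.
      rewrite sub_sub_e', norm_sym. exact Hz.
    + intros i w eps _ He. exists eps. split; auto. intros y Hy.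
      destruct i; simpl in *.
      * exists y. auto.
      * exists (vsub x y). split; auto. split.
        -- unfold vsub. rewrite oppD, oppK, addA, addN, add0l. reflexivity.
        -- assert (E : w = vsub x (vsub x w)).
           { unfold vsub. rewrite oppD, oppK, addA, addN, add0l. reflexivity. }
           rewrite E at 1. rewrite sub_sub_e', norm_sym. exact Hy.
    + exists w, (vsub x w). split; [apply (Hw 0%nat); lia|].
      split; [apply (Hw 1%nat); lia|]. symmetry. apply add_sub.
  - intros mA eA mB eB mX eX _ _ HXa HeX _ x [yx Hxy].
    pose proof (massoc mX eX HXa HeX) as As.
    pose proof (mel mX eX HXa HeX) as El.
    pose proof (mer mX eX HXa HeX) as Er.
    set (inv := fun w => epsilon (inhabits eX) (fun z => inverse_pair mX eX w z)).
    assert (Hinv : forall w, invertible mX eX w -> inverse_pair mX eX w (inv w)).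
    { intros w Hw. apply (epsilon_spec (inhabits eX) (fun z => inverse_pair mX eX w z) Hw). }
    assert (Hinv_eq : forall w w', inverse_pair mX eX w w' -> inv w = w').
    { intros w w' H. apply (inv_unique mX eX HXa HeX w); auto. apply Hinv. exists w'; auto. }
    assert (HWopen : forall w, invertible mX eX w -> exists rho, 0 < rho /\ forall z, vnorm (vsub z w) < rho -> invertible mX eX z).
    { intros w [w' Hw']. destruct (inv_near mX eX HXa HeX w w' Hw' 1) as [r [Hr H]]; [lra|].
      exists r. split; auto. intros z Hz. destruct (H z Hz) as [u' [Hu' _]]. exists u'; auto. }
    set (f := fun (i : nat) (w : X) => match i with
                | 0%nat => w | 1%nat => inv w | 2%nat => mX x (inv w) | _ => mX w yx end).
    assert (Hnx : 0 <= vnorm x) by apply norm_ge0.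
    assert (Hny : 0 <= vnorm yx) by apply norm_ge0.
    destruct (baire_funs V t HV HX phi Hphi (invertible mX eX) f) as [w [Ww Hw]].
    + exists eX. exists eX. split; apply El.
    + exact HWopen.
    + intros i w eps Ww He. pose proof (Hinv w Ww) as Hp.
      destruct i as [|[|[|i]]]; unfold f.
      * exists eps. split; auto.
      * destruct (inv_near mX eX HXa HeX w (inv w) Hp eps He) as [r [Hr H]].
        exists r. split; auto. intros z Wz Hz. destruct (H z Hz) as [u' [Hu' Hb]].
        rewrite (Hinv_eq z u' Hu'). exact Hb.
      * destruct (inv_near mX eX HXa HeX w (inv w) Hp (eps / (vnorm x + 1))) as [r [Hr H]].
        { apply Rdiv_lt_0_compat; lra. }
        exists r. split; auto. intros z Wz Hz. destruct (H z Hz) as [u' [Hu' Hb]].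
        rewrite (Hinv_eq z u' Hu'). rewrite <- (msubr mX eX HXa HeX).
        eapply Rle_lt_trans. apply (mnorm mX eX HXa HeX).
        apply mul_small; auto. apply norm_ge0.
      * exists (eps / (vnorm yx + 1)). split. apply Rdiv_lt_0_compat; lra.
        intros z Wz Hz. rewrite <- (msubl mX eX HXa HeX).
        eapply Rle_lt_trans. apply (mnorm mX eX HXa HeX).
        rewrite Rmult_comm. apply mul_small; auto. apply norm_ge0.
    + intros i w eps Ww He. pose proof (Hinv w Ww) as Hp.
      destruct Hp as [Hw1 Hw2].
      destruct Hxy as [Hxy1 Hxy2].
      assert (Hpq : inverse_pair mX eX (mX x (inv w)) (mX w yx)).
      { split.
        - rewrite <- !As, (As (inv w) w), Hw2, El. exact Hxy1.
        - rewrite <- !As, (As yx x), Hxy2, El. exact Hw1. }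
      destruct i as [|[|[|i]]]; unfold f.
      * destruct (HWopen w Ww) as [r [Hr H]]. exists (Rmin eps r). split.
        apply Rmin_pos; auto.
        intros y Hy. pose proof (Rmin_l eps r). pose proof (Rmin_r eps r).
        exists y. split; [apply H; lra|]. split; auto. lra.
      * destruct (inv_near mX eX HXa HeX (inv w) w (conj Hw2 Hw1) eps He) as [r [Hr H]].
        exists r. split; auto. intros y Hy. destruct (H y Hy) as [u' [Hu' Hb]].
        exists u'. split; [exists y; apply pair_swap; exact Hu'|]. split; auto.
        apply Hinv_eq, pair_swap, Hu'.
      * destruct (inv_near mX eX HXa HeX _ _ Hpq (eps / (vnorm x + 1))) as [r [Hr H]].
        { apply Rdiv_lt_0_compat; lra. }
        exists r. split; auto. intros y Hy. destruct (H y Hy) as [y' [[Hyy1 Hyy2] Hb]].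
        assert (Hz : inverse_pair mX eX (mX y' x) (mX yx y)).
        { split.
          - rewrite <- !As, (As x yx), Hxy1, El. exact Hyy2.
          - rewrite <- !As, (As y y'), Hyy1, El. exact Hxy2. }
        exists (mX y' x). split; [exists (mX yx y); exact Hz|]. split.
        { rewrite (Hinv_eq _ _ Hz), As, Hxy1, El. reflexivity. }
        assert (Ew : w = mX (mX w yx) x) by (rewrite <- As, Hxy2, Er; reflexivity).
        rewrite Ew at 1. rewrite <- (msubl mX eX HXa HeX).
        eapply Rle_lt_trans. apply (mnorm mX eX HXa HeX).
        rewrite Rmult_comm. apply mul_small; auto. apply norm_ge0.
      * destruct (inv_near mX eX HXa HeX _ _ (pair_swap _ _ _ _ Hpq) 1) as [r [Hr H]]; [lra|].
        exists (Rmin r (eps / (vnorm x + 1))). split.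
        { apply Rmin_pos; auto. apply Rdiv_lt_0_compat; lra. }
        intros y Hy. pose proof (Rmin_l r (eps / (vnorm x + 1))).
        pose proof (Rmin_r r (eps / (vnorm x + 1))).
        destruct (H y) as [y' [[Hyy1 Hyy2] _]]; [lra|].
        exists (mX y x). split.
        { exists (mX yx y'). split.
          - rewrite <- !As, (As x yx), Hxy1, El. exact Hyy1.
          - rewrite <- !As, (As y' y), Hyy2, El. exact Hxy2. }
        split.
        { rewrite <- As, Hxy1, Er. reflexivity. }
        assert (Ew : w = mX (mX w yx) x) by (rewrite <- As, Hxy2, Er; reflexivity).
        rewrite Ew at 1. rewrite <- (msubl mX eX HXa HeX).
        eapply Rle_lt_trans. apply (mnorm mX eX HXa HeX).
        rewrite Rmult_comm. apply mul_small; auto. apply norm_ge0. lra.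
    + set (y2 := inv w). pose proof (Hinv w Ww) as [Hw1 Hw2]. fold y2 in Hw1, Hw2.
      exists (mX x y2), (mX w yx), w, y2. split; [|split; [|split; [|split; [|split; [|split]]]]].
      * rewrite <- As, Hw2, Er. reflexivity.
      * destruct Hxy as [Hxy1 Hxy2]. split.
        -- rewrite <- As, (As y2), Hw2, El. exact Hxy1.
        -- rewrite <- As, (As yx), Hxy2, El. exact Hw1.
      * split; auto.
      * apply (Hw 2%nat); lia.
      * apply (Hw 3%nat); lia.
      * apply (Hw 0%nat); lia.
      * apply (Hw 1%nat); lia.
Qed.
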